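(* The insertion-sort strategy is efficient, and hence regret-free.
   Context: Let $\mathcal{X}$ be a finite set of alternatives. A proto-ranking is an irreflexive and transitive binary relation on $\mathcal{X}$; a ranking is a total proto-ranking; a tournament is a total and asymmetric binary relation on $\mathcal{X}$. The chair has a fixed preference $\succ$, which is a ranking on $\mathcal{X}$. Interaction: given a tournament $\mathrel{W}$ (the ''general will''), set $R_0=\varnothing$. In each period $t\geq 1$ in which $R_{t-1}$ is not total, the chair offers a pair $\{x,y\}$ of distinct alternatives that are unranked by $R_{t-1}$ (neither $x R_{t-1} y$ nor $y R_{t-1} x$); the winner is $x$ if $x \mathrel{W} y$ and $y$ otherwise, and $R_t$ is the transitive closure of $R_{t-1}\cup\{(\text{winner},\text{loser})\}$. The process stops when $R_t$ is total. A history is a finite sequence of ordered (winner, loser) pairs that can arise in this way (each offered pair unranked by the proto-ranking induced by the earlier pairs); it is terminal if its induced proto-ranking is total. A strategy of the chair assigns to each non-terminal history a pair of alternatives unranked at that history. The outcome of a strategy $\sigma$ under a tournament $\mathrel{W}$ is the final ranking produced. A ranking is $\mathrel{W}$-feasible if it is the outcome under $\mathrel{W}$ of some strategy. A ranking $R$ is more aligned with $\succ$ than a ranking $R'$ if for all $x,y$ with $x\succ y$, $x R' y$ implies $x R y$. A ranking is $\mathrel{W}$-unimprovable if no other $\mathrel{W}$-feasible ranking is more aligned with $\succ$ than it. A strategy is regret-free if for every tournament $\mathrel{W}$ its outcome under $\mathrel{W}$ is $\mathrel{W}$-unimprovable. A ranking $R$ is $\mathrel{W}$-efficient if $x\succ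 y$ and $x\mathrel{W} y$ imply $x R y$. A strategy is efficient if for every tournament $\mathrel{W}$ its outcome under $\mathrel{W}$ is $\mathrel{W}$-efficient. The insertion-sort strategy: after a history with current proto-ranking $R$, for each $z$ let $L(z)=\{w\in\mathcal{X}: z\succ w,\ \text{neither } zRw \text{ nor } wRz\}$. Let $x$ be the $\succ$-worst alternative with $L(x)\neq\varnothing$, and $y$ the $R$-highest element of $L(x)$ (i.e. $yRz$ for all $z\in L(x)\setminus\{y\}$; this is well defined). The strategy offers $\{x,y\}$. *)

(* Defs.v *)
From mathcomp Require Import all_boot.
Set Implicit Arguments. Unset Strict Implicit. Unset Printing Implicit Defensive.

Section Agenda.
Variable X : finType.

Definition irreflexive_rel (R : rel X) := forall x, ~~ R x x.
Definition transitive_rel (R : rel X) := forall x y z, R x y -> R y z -> R x z.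
Definition total_rel (R : rel X) := forall x y, x != y -> R x y || R y x.
Definition asymmetric_rel (R : rel X) := forall x y, R x y -> ~~ R y x.

Definition proto_ranking (R : rel X) := irreflexive_rel R /\ transitive_rel R.
Definition ranking (R : rel X) := proto_ranking R /\ total_rel R.
Definition tournament (W : rel X) := total_rel W /\ asymmetric_rel W.

(* A (candidate) history is a sequence of ordered (winner, loser) pairs. *)
Definition history_edges (h : seq (X * X)) : rel X := fun a b => (a, b) \in h.

(* The proto-ranking induced by h: the transitive closure of its pairs. *)
Definition induced (h : seq (X * X)) : rel X :=
  fun x y => [exists z, ((x, z) \in h) && connect (history_edges h) z y].

Definition unranked (R : rel X) (x y : X) := ~~ R x y && ~~ R y x.

Inductive history : seq (X * X) -> Prop :=
| history_nil : history [::]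
| history_rcons h a b :
    history h -> a != b -> unranked (induced h) a b -> history (rcons h (a, b)).

Definition terminal (h : seq (X * X)) : bool :=
  [forall x, forall y, (x != y) ==> (induced h x y || induced h y x)].

(* A strategy maps histories to offered pairs; [None] is only a filler value
   (e.g. at terminal histories). *)
Definition strategy_fun := seq (X * X) -> option (X * X).

Definition is_strategy (sigma : strategy_fun) :=
  forall h, history h -> ~~ terminal h ->
    exists x y, sigma h = Some (x, y) /\ x != y /\ unranked (induced h) x y.

Definition winner_loser (W : rel X) (x y : X) : X * X :=
  if W x y then (x, y) else (y, x).

Inductive generated (sigma : strategy_fun) (W : rel X) : seq (X * X) -> Prop :=
| gen_nil : generated sigma W [::]
| gen_step h x y :
    generated sigma W h -> ~~ terminal h -> sigma h = Some (x, y) ->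
    generated sigma W (rcons h (winner_loser W x y)).

Definition outcome (sigma : strategy_fun) (W : rel X) (R : rel X) :=
  exists h, generated sigma W h /\ terminal h /\ R =2 induced h.

Definition feasible (W : rel X) (R : rel X) :=
  exists sigma, is_strategy sigma /\ outcome sigma W R.

Variable pref : rel X. (* the chair's preference x ≻ y *)

Definition more_aligned (R R' : rel X) :=
  forall x y, pref x y -> R' x y -> R x y.

Definition unimprovable (W R : rel X) :=
  forall R', feasible W R' -> more_aligned R' R -> R' =2 R.

Definition regret_free (sigma : strategy_fun) :=
  forall W, tournament W -> forall R, outcome sigma W R -> unimprovable W R.

Definition W_efficient (W R : rel X) :=
  forall x y, pref x y -> W x y -> R x y.

Definition efficient (sigma : strategy_fun) :=
  forall W, tournament W -> forall R, outcome sigma W R -> W_efficient W R.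

Definition L_set (R : rel X) (z : X) : {set X} :=
  [set w | pref z w && unranked R z w].

Definition insertion_sort : strategy_fun := fun h =>
  let R := induced h in
  match [pick x | (L_set R x != set0) &&
                  [forall z, (L_set R z != set0) ==> (z == x) || pref z x]] with
  | None => None
  | Some x =>
    match [pick y | (y \in L_set R x) &&
                    [forall z, (z \in L_set R x) ==> (z == y) || R y z]] with
    | None => None
    | Some y => Some (x, y)
    end
  end.

End Agenda.

(* Main.v *)
Require Import Defs.
From mathcomp Require Import all_boot.
Set Implicit Arguments. Unset Strict Implicit. Unset Printing Implicit Defensive.

Section Closure.
Variable T : finType.
Definition tc (e : rel T) x y := [exists z, e x z && connect e z y].

Lemma connect_add (e e' : rel T) a b :
  (forall u v, e' u v = e u v || ((u == a) && (v == b))) ->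
  forall z y, connect e' z y -> connect e z y \/ (connect e z a /\ connect e b y).
Proof.
move=> He z y /connectP [p Hp ->] {y}.
elim: p z Hp => [|w p IH] z /=; first by left; exact: connect0.
case/andP => Hzw /IH [H|[H1 H2]]; rewrite He in Hzw;
  case/orP: Hzw => [Hzw | /andP [/eqP Ez /eqP Ew]].
- by left; exact: connect_trans (connect1 Hzw) H.
- by subst; right; split => //; exact: connect0.
- by right; split => //; exact: connect_trans (connect1 Hzw) H1.
- by subst; right; split => //; exact: connect0.
Qed.

Lemma connect_tc (e : rel T) u v : connect e u v -> v = u \/ tc e u v.
Proof.
move/connectP => [[|w p] /= Hp ->]; [by left | right].
case/andP: Hp => H1 H2; apply/existsP; exists w; rewrite H1 /=.
by apply/connectP; exists p.
Qed.

Lemma tc_connect (e : rel T) u v : tc e u v -> connect e u v.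
Proof. by case/existsP => z /andP [H1 H2]; exact: connect_trans (connect1 H1) H2. Qed.

Lemma tc_trans (e : rel T) u v w : tc e u v -> tc e v w -> tc e u w.
Proof.
case/existsP => z /andP [H1 H2] /tc_connect H3.
by apply/existsP; exists z; rewrite H1 (connect_trans H2 H3).
Qed.

Lemma tc1 (e : rel T) u v : e u v -> tc e u v.
Proof. by move=> H; apply/existsP; exists v; rewrite H connect0. Qed.

Lemma tc_mono (e e' : rel T) : (forall u v, e u v -> e' u v) ->
  forall u v, tc e u v -> tc e' u v.
Proof.
move=> Hs u v /existsP [z /andP [H1 H2]]; apply/existsP; exists z.
rewrite Hs //=; apply: connect_sub H2 => p q Hpq; exact: connect1 (Hs _ _ Hpq).
Qed.

Lemma tc_add (e e' : rel T) a b :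
  (forall u v, e' u v = e u v || ((u == a) && (v == b))) ->
  forall u v, tc e' u v <-> tc e u v \/ ((u = a \/ tc e u a) /\ (v = b \/ tc e b v)).
Proof.
move=> He u v; split.
- case/existsP => z /andP [Huz /(connect_add He) Hc].
  rewrite He in Huz; case/orP: Huz => [Huz | /andP [/eqP Eu /eqP Ez]].
  + case: Hc => [Hc | [Hc1 Hc2]].
    * by left; apply/existsP; exists z; rewrite Huz.
    * right; split; first by right; apply/existsP; exists z; rewrite Huz.
      exact: connect_tc Hc2.
  + subst; right; split; first by left.
    case: Hc => [Hc | [_ Hc]]; exact: connect_tc Hc.
- have Hs : forall p q, e p q -> e' p q by move=> p q H; rewrite He H.
  have Hab : tc e' a b by apply: tc1; rewrite He !eqxx orbT.
  case => [H | [H1 H2]]; first exact: tc_mono H.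
  have Hua : u = a \/ tc e' u a by case: H1 => [->|H]; [left | right; exact: tc_mono H].
  have Hbv : v = b \/ tc e' b v by case: H2 => [->|H]; [left | right; exact: tc_mono H].
  have Hub : tc e' u b by case: Hua => [->|H] //; exact: tc_trans H Hab.
  by case: Hbv => [->|H] //; exact: tc_trans Hub H.
Qed.
End Closure.

Lemma induced_tc (X : finType) h : induced h =2 tc (history_edges (X:=X) h).
Proof. by []. Qed.

Lemma edges_rcons (X : finType) (h : seq (X * X)) a b u v :
  history_edges (rcons h (a, b)) u v = history_edges h u v || ((u == a) && (v == b)).
Proof. by rewrite /history_edges mem_rcons in_cons xpair_eqE orbC. Qed.

Lemma induced_rcons (X : finType) (h : seq (X * X)) a b u v :
  induced (rcons h (a, b)) u v <->
  induced h u v \/ ((u = a \/ induced h u a) /\ (v = b \/ induced h b v)).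
Proof. exact: (tc_add (edges_rcons h a b)). Qed.

Lemma induced_trans (X : finType) (h : seq (X * X)) u v w :
  induced h u v -> induced h v w -> induced h u w.
Proof. exact: tc_trans. Qed.

Lemma ex_top (T : finType) (r : rel T) (S : {set T}) :
  (forall x y z, r x y -> r y z -> r x z) ->
  (forall x y, x \in S -> y \in S -> x != y -> r x y || r y x) ->
  S != set0 -> exists2 y, y \in S & forall z, z \in S -> (z == y) || r y z.
Proof.
move=> Htr Htot /set0Pn [s0 Hs0].
suff: forall s : seq T, s != [::] -> {subset s <= S} ->
  exists2 y, y \in s & forall z, z \in s -> (z == y) || r y z.
  move=> /(_ (enum S)) []; first by apply/eqP => E; move: (mem_enum S s0); rewrite E Hs0.
  - by move=> z; rewrite mem_enum.
  - by move=> y; rewrite mem_enum => Hy Hz; exists y => // z Hzs; apply: Hz; rewrite mem_enum.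
elim => [|a s IH] // _ Hsub.
case: s IH Hsub => [|b s] IH Hsub.
  by exists a; rewrite ?inE // => z; rewrite inE => ->.
case: IH => //.
  by move=> z Hz; apply: Hsub; rewrite inE Hz orbT.
move=> y Hy Hmax.
have HyS : y \in S by apply: Hsub; rewrite inE Hy orbT.
have HaS : a \in S by apply: Hsub; rewrite inE eqxx.
case: (eqVneq a y) => [Eay|Nay].
  by exists y; rewrite ?inE ?Eay ?eqxx // => z; rewrite inE => /orP [->|/Hmax].
case Hya: (r y a).
  exists y; first by rewrite inE Hy orbT.
  by move=> z; rewrite inE => /orP [/eqP ->|/Hmax //]; rewrite Hya orbT.
have Hay : r a y by move: (Htot _ _ HaS HyS Nay); rewrite Hya orbF.
exists a; first by rewrite inE eqxx.
move=> z; rewrite inE => /orP [->//|/Hmax /orP [/eqP ->|Hyz]]; first by rewrite Hay orbT.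
by rewrite (Htr _ _ _ Hay Hyz) orbT.
Qed.

Section Main.
Variable X : finType.
Variable pref : rel X.
Hypothesis pirr : forall x, ~~ pref x x.
Hypothesis ptr : forall x y z, pref x y -> pref y z -> pref x z.
Hypothesis ptot : forall x y, x != y -> pref x y || pref y x.

Lemma pasym x y : pref x y -> ~~ pref y x.
Proof. by move=> H; apply/negP => H'; move: (pirr x); rewrite (ptr H H'). Qed.

Lemma pneq x y : pref x y -> x != y.
Proof. by move=> H; apply/eqP => E; move: (pirr x); rewrite {2}E H. Qed.

Notation L := (L_set pref).

Lemma inL R z w : (w \in L R z) = pref z w && ~~ R z w && ~~ R w z.
Proof. by rewrite inE /unranked andbA. Qed.

Lemma Lempty R z w : L R z = set0 -> pref z w -> R z w || R w z.
Proof.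
move=> H Hp; apply/negPn/negP; rewrite negb_or => Hn.
have: w \in L R z by rewrite inL Hp /=.
by rewrite H inE.
Qed.

Lemma Lempty_intro R z : (forall w, pref z w -> R z w || R w z) -> L R z = set0.
Proof.
move=> H; apply/setP => w; rewrite inL in_set0.
case Hp: (pref z w) => //=; by move: (H w Hp); case: (R z w); case: (R w z).
Qed.

Lemma Lsub (R R' : rel X) z : (forall u v, R u v -> R' u v) -> L R z = set0 -> L R' z = set0.
Proof.
move=> Hs H; apply: Lempty_intro => w Hp; case/orP: (Lempty H Hp) => E.
- by rewrite (Hs _ _ E).
- by rewrite (Hs _ _ E) orbT.
Qed.

Lemma Lne R z w : w \in L R z -> L R z != set0.
Proof. by move=> H; apply/set0Pn; exists w. Qed.

Definition worst (R : rel X) x :=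
  (L R x != set0) && [forall z, (L R z != set0) ==> (z == x) || pref z x].

Lemma worstP R x : worst R x ->
  L R x != set0 /\ (forall z, L R z != set0 -> (z == x) || pref z x).
Proof. by case/andP => H1 /forallP H2; split => // z; apply/implyP. Qed.

Lemma spec h x y : insertion_sort pref h = Some (x, y) ->
  [/\ worst (induced h) x, y \in L (induced h) x &
      forall z, z \in L (induced h) x -> (z == y) || induced h y z].
Proof.
rewrite /insertion_sort.
case: pickP => [x0 Hx0|_] //.
case: pickP => [y0 Hy0|_] // [<- <-].
case/andP: Hy0 => H1 /forallP H2; split => // z; exact/implyP.
Qed.

Variable W : rel X.

Definition Linv (R : rel X) :=
 [/\ forall u, ~~ R u u,
     forall u v, pref u v -> W u v -> ~~ R v u,
     forall z d, R z d -> L R z = set0 &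
     forall z w u, (R z w || R w z) -> L R u != set0 -> (u == z) || pref u z].



Lemma step (R R' : rel X) x y a b :
  (forall u v w, R u v -> R v w -> R u w) ->
  (forall u v, R' u v <-> R u v \/ ((u = a \/ R u a) /\ (v = b \/ R b v))) ->
  Linv R -> worst R x -> y \in L R x ->
  (forall z, z \in L R x -> (z == y) || R y z) ->
  winner_loser W x y = (a, b) -> Linv R'.
Proof.
move=> Rtr HR' [K0 K1 K2a K2b] /worstP [HLx Hw] HyL Hmax.
have Hsub : forall u v, R u v -> R' u v by move=> u v H; apply/HR'; left.
move: HyL; rewrite inL => /andP [/andP [Pxy Nxy] Nyx].
have F1 : forall d, ~~ R x d.
  by move=> d; apply/negP => /K2a E; move: HLx; rewrite E eqxx.
have Ly0 : L R y = set0.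
  apply/eqP; apply/negPn/negP => /Hw /orP [/eqP E|E].
  - by move: (pirr x); rewrite -{2}E Pxy.
  - by move: (pasym Pxy); rewrite E.
have F2a : forall c, R c x -> R c y.
  move=> c Hcx; have Lc := K2a _ _ Hcx.
  have Ncy : c != y by apply/eqP => E; move: Nyx; rewrite -E Hcx.
  have : R c y || R y c.
    case/orP: (ptot Ncy) => P; first exact: Lempty Lc P.
    by rewrite orbC; exact: Lempty Ly0 P.
  case/orP => // Hyc; by move: Nyx; rewrite (Rtr _ _ _ Hyc Hcx).
have F2b : forall c, R c y -> R c x.
  move=> c Hcy; case Hcx: (R c x) => //.
  have Ncx : c != x by apply/eqP => E; move: Nxy; rewrite -E Hcy.
  case/orP: (ptot Ncx) => P.
    by move: (Lempty (K2a _ _ Hcy) P); rewrite Hcx (negbTE (F1 c)).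
  have : c \in L R x by rewrite inL P Hcx F1.
  case/Hmax/orP => [/eqP E|Hyc].
    by move: (K0 y); rewrite -{1}E Hcy.
  by move: (K0 y); rewrite (Rtr _ _ _ Hyc Hcy).
have HLR' : forall z, L R' z != set0 -> L R z != set0.
  move=> z; apply: contraNN => /eqP E; apply/eqP; exact: Lsub Hsub E.
rewrite /winner_loser; case: ifP => HW [Ea Eb]; subst a b.
-
  have LxW : L R' x = set0.
    apply: Lempty_intro => w P.
    case Hr: (R x w || R w x).
      by case/orP: Hr => H; rewrite (Hsub _ _ H) ?orbT.
    move: Hr => /negbT; rewrite negb_or => /andP [N1 N2].
    have : w \in L R x by rewrite inL P N1 N2.
    case/Hmax/orP => [/eqP ->|Hyw].
      by have -> : R' x y by apply/HR'; right; split; left.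
    by have -> : R' x w by apply/HR'; right; split; [left|right].
  split.
  + move=> u; apply/negP => /HR' [H|[[E1|H1] [E2|H2]]].
    * by move: (K0 u); rewrite H.
    * by move: (pneq Pxy); rewrite -E1 -E2 eqxx.
    * by move: Nyx; rewrite -E1 H2.
    * by move: Nyx; rewrite -E2 H1.
    * by move: Nyx; rewrite (Rtr _ _ _ H2 H1).
  + move=> u v Puv Wuv; apply/negP => /HR' [H|[[E1|H1] [E2|H2]]].
    * by move: (K1 _ _ Puv Wuv); rewrite H.
    * by move: (pasym Pxy); rewrite -E1 -E2 Puv.
    * have := K2b u y x (introT orP (or_intror H2)) HLx.
      rewrite E1 in Puv.
      case/orP => [/eqP E|P].
      - by move: (pirr u); rewrite -{2}E Puv.
      - by move: (pasym P); rewrite Puv.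
    * by move: (K1 _ _ Puv Wuv); rewrite E2 (F2a _ H1).
    * by move: (K1 _ _ Puv Wuv); rewrite (Rtr _ _ _ (F2a _ H1) H2).
  + move=> z d /HR' [H|[[E1|H1] _]].
    * exact: Lsub Hsub (K2a _ _ H).
    * by subst.
    * exact: Lsub Hsub (K2a _ _ H1).
  + move=> z w u Hzw /HLR' HLu.
    have : (exists w', R z w' || R w' z) \/ z = x \/ z = y.
      case/orP: Hzw => /HR' [H|[[E1|H1] [E2|H2]]];
        try (by left; exists w; rewrite H ?orbT); try (by right; left);
        try (by right; right); try (by left; exists x; rewrite ?H1 ?H2 ?orbT);
        by left; exists y; rewrite ?H1 ?H2 ?orbT.
    case => [[w' Ht]|[E|E]]; first exact: K2b Ht HLu.
    * by subst; exact: Hw.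
    * subst; case/orP: (Hw _ HLu) => [/eqP ->|P]; first by rewrite Pxy orbT.
      by rewrite (ptr P Pxy) orbT.
-
  split.
  + move=> u; apply/negP => /HR' [H|[[E1|H1] [E2|H2]]].
    * by move: (K0 u); rewrite H.
    * by move: (pneq Pxy); rewrite -E1 -E2 eqxx.
    * by move: (F1 y); rewrite -E1 H2.
    * by move: Nxy; rewrite -E2 H1.
    * by move: Nxy; rewrite (Rtr _ _ _ H2 H1).
  + move=> u v Puv Wuv; apply/negP => /HR' [H|[[E1|H1] [E2|H2]]].
    * by move: (K1 _ _ Puv Wuv); rewrite H.
    * by subst; rewrite HW in Wuv.
    * by move: (F1 u); rewrite H2.
    * by subst; move: (K1 _ _ Puv Wuv); rewrite (F2b _ H1).
    * by move: (F1 u); rewrite H2.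
  + move=> z d /HR' [H|[[E1|H1] _]].
    * exact: Lsub Hsub (K2a _ _ H).
    * by subst; exact: Lsub Hsub Ly0.
    * exact: Lsub Hsub (K2a _ _ H1).
  + move=> z w u Hzw /HLR' HLu.
    have : (exists w', R z w' || R w' z) \/ z = x \/ z = y.
      case/orP: Hzw => /HR' [H|[[E1|H1] [E2|H2]]];
        try (by left; exists w; rewrite H ?orbT); try (by right; left);
        try (by right; right); try (by left; exists x; rewrite ?H1 ?H2 ?orbT);
        by left; exists y; rewrite ?H1 ?H2 ?orbT.
    case => [[w' Ht]|[E|E]]; first exact: K2b Ht HLu.
    * by subst; exact: Hw.
    * subst; case/orP: (Hw _ HLu) => [/eqP ->|P]; first by rewrite Pxy orbT.
      by rewrite (ptr P Pxy) orbT.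
Qed.

Lemma induced_nil u v : induced (X:=X) [::] u v = false.
Proof. by apply/existsP => [[z]]. Qed.

Lemma gen_inv h : generated (insertion_sort pref) W h -> Linv (induced h).
Proof.
elim => [|h0 x y Hg IH Nt Hs].
  split => [u|u v _ _|z d|z w u]; rewrite ?induced_nil //.
case/spec: Hs => Hw Hy Hm.
case E: (winner_loser W x y) => [a b].
apply: (step _ _ IH Hw Hy Hm E).
- by move=> u v w; exact: induced_trans.
- by move=> u v; exact: induced_rcons.
Qed.

Lemma worst_low (R : rel X) x u : worst R x -> u \in L R x -> L R u = set0.
Proof.
case/worstP => _ Hw; rewrite inL => /andP [/andP [P _] _].
apply/eqP/negPn/negP => /Hw /orP [/eqP E|P'].
- by move: P; rewrite E (negbTE (pirr x)).
- by move: (pasym P); rewrite P'.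
Qed.

Lemma ex_y h x : worst (induced h) x ->
  exists2 y, y \in L (induced h) x & forall z, z \in L (induced h) x -> (z == y) || induced h y z.
Proof.
move=> Hw; apply: ex_top.
- by move=> u v w; exact: induced_trans.
- move=> u w Hu Hv Nuw; case/orP: (ptot Nuw) => P.
  + exact: Lempty (worst_low Hw Hu) P.
  + by rewrite orbC; exact: Lempty (worst_low Hw Hv) P.
- by case/worstP: Hw.
Qed.

Lemma ins_strategy : is_strategy (insertion_sort pref).
Proof.
move=> h _ Nt.
have [x Hwx] : exists x, worst (induced h) x.
  have [] := @ex_top _ (fun a b => pref b a) [set z | L (induced h) z != set0].
  - by move=> a b c H1 H2; exact: ptr H2 H1.
  - by move=> a b _ _ N; rewrite orbC; exact: ptot N.
  - move/forallPn: Nt => [u /forallPn [v]]; rewrite negb_imply negb_or.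
    case/andP => Nuv /andP [N1 N2]; apply/set0Pn.
    case/orP: (ptot Nuv) => P.
    + by exists u; rewrite inE; apply/set0Pn; exists v; rewrite inL P N1 N2.
    + by exists v; rewrite inE; apply/set0Pn; exists u; rewrite inL P N1 N2.
  - move=> x; rewrite inE => Hx Hmax; exists x; apply/andP; split => //.
    by apply/forallP => z; apply/implyP => Hz; apply: Hmax; rewrite inE.
have [y Hy Hmy] := ex_y Hwx.
rewrite /insertion_sort.
case: pickP => [x0 Hx0|Hn]; last first.
  by move: (Hn x); rewrite /= -/(worst _ x) Hwx.
have Hw0 : worst (induced h) x0 := Hx0.
have [y1 Hy1 Hmy1] := ex_y Hw0.
case: pickP => [y0 Hy0|Hn]; last first.
  have : (y1 \in L (induced h) x0) &&
         [forall z, (z \in L (induced h) x0) ==> (z == y1) || induced h y1 z].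
    by rewrite Hy1 /=; apply/forallP => z; apply/implyP; exact: Hmy1.
  by rewrite Hn.
case/andP: Hy0 => Hy0 _.
exists x0, y0; split => //.
move: Hy0; rewrite inE => /andP [P U]; split => //; exact: pneq.
Qed.

Lemma term_tot (h : seq (X * X)) u v : terminal h -> u != v -> induced h u v || induced h v u.
Proof. by move/forallP/(_ u)/forallP/(_ v)/implyP. Qed.

Lemma eff_W : tournament W -> forall R, outcome (insertion_sort pref) W R -> W_efficient pref W R.
Proof.
move=> _ R [h [Hg [Ht HR]]] u v P Wuv; rewrite HR.
have [K0 K1 _ _] := gen_inv Hg.
case/orP: (term_tot Ht (pneq P)) => // H.
by move: (K1 _ _ P Wuv); rewrite H.
Qed.

Lemma gen_hist sigma h : is_strategy sigma -> generated sigma W h -> history h.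
Proof.
move=> Hstr; elim => [|h0 x y Hg IH Nt Hs]; first constructor.
have [x' [y' [E [N U]]]] := Hstr h0 IH Nt.
rewrite Hs in E; case: E => Ex Ey; subst x' y'.
rewrite /winner_loser; case: ifP => _; constructor => //.
- by rewrite eq_sym.
- by move: U; rewrite /unranked andbC.
Qed.

Lemma hist_irr (h : seq (X * X)) : history h -> forall u, ~~ induced h u u.
Proof.
elim => [|h0 a b Hh IH N U] u; first by rewrite induced_nil.
move: U; rewrite /unranked => /andP [U1 U2].
apply/negP => /induced_rcons [H|[[E1|H1] [E2|H2]]].
- by move: (IH u); rewrite H.
- by move: N; rewrite -E1 -E2 eqxx.
- by move: U2; rewrite -E1 H2.
- by move: U2; rewrite -E2 H1.
- by move: U2; rewrite (induced_trans H2 H1).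
Qed.

Lemma gen_edge sigma h : tournament W -> is_strategy sigma -> generated sigma W h ->
  forall u v, (u, v) \in h -> W u v.
Proof.
move=> [Wtot _] Hstr Hg; elim: Hg => [|h0 x y Hg IH Nt Hs] // u v.
rewrite mem_rcons in_cons => /orP [/eqP E|/IH //].
have [x' [y' [E' [N _]]]] := Hstr h0 (gen_hist Hstr Hg) Nt.
rewrite Hs in E'; case: E' => Ex Ey; subst x' y'.
move: E; rewrite /winner_loser; case: ifP => Hxy [-> ->] //.
by move: (Wtot _ _ N); rewrite Hxy.
Qed.

Lemma adjacent (h : seq (X * X)) u v : induced h u v ->
  (forall w, ~~ (induced h u w && induced h w v)) -> (u, v) \in h.
Proof.
case/existsP => z /andP [H1 /connect_tc [E|H2]] Hn; first by rewrite E.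
have H2' : induced h z v := H2.
have H1' : induced h u z := tc1 (e := history_edges h) H1.
by move: (Hn z); rewrite H1' H2'.
Qed.

Lemma regret_W : tournament W -> forall R, outcome (insertion_sort pref) W R ->
  unimprovable pref W R.
Proof.
move=> Wt R HRo R' [sig [Hsig [h' [Hg' [Ht' HR']]]]] Hal.
have Heff := eff_W Wt HRo.
case: HRo => h [Hg [Ht HR]].
have Hh := gen_hist ins_strategy Hg.
have Hh' := gen_hist Hsig Hg'.
have irr := hist_irr Hh.
have irr' := hist_irr Hh'.
have adj : forall u v, induced h' u v ->
    (forall w, ~~ (induced h' u w && induced h' w v)) -> induced h u v.
  move=> u v Huv Hn.
  have Nuv : u != v by apply/eqP => E; move: (irr' u); rewrite {2}E Huv.
  have Wuv := gen_edge Wt Hsig Hg' (adjacent Huv Hn).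
  case Iuv: (induced h u v) => //.
  have Ivu : induced h v u by move: (term_tot Ht Nuv); rewrite Iuv.
  case/orP: (ptot Nuv) => P.
  - by move: (Heff u v P Wuv); rewrite HR Iuv.
  - have : R' v u by apply: Hal => //; rewrite HR.
    rewrite HR' => Hvu.
    by move: (irr' u); rewrite (induced_trans Huv Hvu).
have claim : forall n u v, #|[set w | induced h' u w && induced h' w v]| <= n ->
    induced h' u v -> induced h u v.
  elim => [|n IH] u v Hc Huv;
  case: (boolP [exists w, induced h' u w && induced h' w v]) => [/existsP [w Hw] | Hn].
  - have : 0 < #|[set w | induced h' u w && induced h' w v]|.
      by apply/card_gt0P; exists w; rewrite inE.
    by rewrite leqNgt in Hc; rewrite (negbTE Hc).
  - exact: adj Huv (fun w => (existsPn Hn) w).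
  - case/andP: Hw => H1 H2.
    have Hp : forall a b c,
        (forall w', induced h' a w' -> induced h' w' b -> induced h' u w' && induced h' w' v) ->
        induced h' u c && induced h' c v -> ~~ (induced h' a c && induced h' c b) ->
        #|[set w | induced h' a w && induced h' w b]| <= n.
      move=> a b c Hs Hc1 Hc2.
      rewrite -ltnS; apply: leq_trans _ Hc; apply: proper_card; apply/properP; split.
      + by apply/subsetP => w'; rewrite !inE => /andP [Haw Hwb]; apply: Hs.
      + by exists c; rewrite inE.
    apply: (induced_trans (IH u w _ H1) (IH w v _ H2)).
    + apply: (Hp _ _ w); first by move=> w' A B; rewrite A (induced_trans B H2).
      * by rewrite H1 H2.
      * by rewrite (negbTE (irr' w)) andbF.
    + apply: (Hp _ _ w); first by move=> w' A B; rewrite B (induced_trans H1 A).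
      * by rewrite H1 H2.
      * by rewrite (negbTE (irr' w)).
  - exact: adj Huv (fun w => (existsPn Hn) w).
move=> u v; rewrite HR HR'; apply/idP/idP => [H|H].
  exact: claim _ u v (leqnn _) H.
have Nuv : u != v by apply/eqP => E; move: (irr u); rewrite {2}E H.
case/orP: (term_tot Ht' Nuv) => // Hvu.
by move: (irr u); rewrite (induced_trans H (claim _ v u (leqnn _) Hvu)).
Qed.
End Main.

Theorem theorem1 (X : finType) (pref : rel X) :
  ranking pref ->
  is_strategy (insertion_sort pref) /\
  efficient pref (insertion_sort pref) /\
  regret_free pref (insertion_sort pref).
Proof.
case => [[Hirr Htr] Htot].
have pirr : forall x, ~~ pref x x := Hirr.
have ptr : forall x y z, pref x y -> pref y z -> pref x z := Htr.
split; first exact: (ins_strategy pirr ptr Htot).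
split => W Wt R HR; first exact: (eff_W pirr ptr Htot Wt HR).
exact: (regret_W pirr ptr Htot Wt HR).
Qed.
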